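(* Let $x,y\ge2$ be coprime integers, $p\ge 2$, $q=pxy-1$, and let $G$ be the fundamental group of the complement of the $(p,q)$-cable of the $(x,y)$-torus knot, with canonical meridian and longitude $\mu_C,\lambda_C$ of the cable. Then for every positive integer $\beta$ and every left-orderable quotient $Q$ of $G$, the image of $\mu_C^{pq\beta-1}\lambda_C^{\beta}$ in $Q$ is not the identity.
   Context: Explicitly, $G$ is generated by $a,b,t$ with relations $a^x=b^y$ and $\mu^q\lambda^p=t^p$, where $\mu=b^ja^i$, $\lambda=\mu^{-xy}a^x$ with $xj+yi=1$; and $\mu_C=\mu^u\lambda^vt^{-v}$, $\lambda_C=\mu_C^{-pq}t^p$ with $pu-qv=1$. A left-orderable group is a nontrivial group admitting a total order invariant under left multiplication. *)

(* Defs.v *)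
From Stdlib Require Import ZArith.
Open Scope Z_scope.

Record Group := {
  carrier :> Type;
  gmul : carrier -> carrier -> carrier;
  ginv : carrier -> carrier;
  gone : carrier;
  gmul_assoc : forall x y z, gmul x (gmul y z) = gmul (gmul x y) z;
  gmul_1l : forall x, gmul gone x = x;
  gmul_1r : forall x, gmul x gone = x;
  gmul_Vl : forall x, gmul (ginv x) x = gone;
  gmul_Vr : forall x, gmul x (ginv x) = gone
}.

Arguments gmul {g}.
Arguments ginv {g}.
Arguments gone {g}.

Fixpoint gpown {G : Group} (g : G) (n : nat) : G :=
  match n with
  | O => gone
  | S n' => gmul g (gpown g n')
  end.

Definition gpow {G : Group} (g : G) (k : Z) : G :=
  if (0 <=? k)%Z then gpown g (Z.to_nat k) else ginv (gpown g (Z.to_nat (- k))).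

Inductive generated {G : Group} (S : G -> Prop) : G -> Prop :=
  | gen_one : generated S gone
  | gen_base : forall g, S g -> generated S g
  | gen_mul : forall g h, generated S g -> generated S h -> generated S (gmul g h)
  | gen_inv : forall g, generated S g -> generated S (ginv g).

Definition left_orderable (G : Group) : Prop :=
  (exists g : G, g <> gone) /\
  exists le : G -> G -> Prop,
    (forall x, le x x) /\
    (forall x y, le x y -> le y x -> x = y) /\
    (forall x y z, le x y -> le y z -> le x z) /\
    (forall x y, le x y \/ le y x) /\
    (forall g x y, le x y -> le (gmul g x) (gmul g y)).

Definition mu_el {G : Group} (a b : G) (i j : Z) : G := gmul (gpow b j) (gpow a i).
Definition lambda_el {G : Group} (a b : G) (x y i j : Z) : G :=
  gmul (gpow (mu_el a b i j) (- (x * y))) (gpow a x).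
Definition muC_el {G : Group} (a b t : G) (x y i j u v : Z) : G :=
  gmul (gmul (gpow (mu_el a b i j) u) (gpow (lambda_el a b x y i j) v)) (gpow t (- v)).
Definition lambdaC_el {G : Group} (a b t : G) (x y i j u v p q : Z) : G :=
  gmul (gpow (muC_el a b t x y i j u v) (- (p * q))) (gpow t p).

(* Main.v *)
Require Import Defs.
From Stdlib Require Import ZArith Lia Classical.
Open Scope Z_scope.



Definition commute {G : Group} (g h : G) := gmul g h = gmul h g.

Lemma cancel_l {G : Group} (g x y : G) : gmul g x = gmul g y -> x = y.
Proof. intro H. rewrite <- (gmul_1l G x), <- (gmul_1l G y), <- (gmul_Vl G g),
  <- !gmul_assoc, H. reflexivity. Qed.

Lemma cancel_r {G : Group} (g x y : G) : gmul x g = gmul y g -> x = y.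
Proof. intro H. rewrite <- (gmul_1r G x), <- (gmul_1r G y), <- (gmul_Vr G g),
  !gmul_assoc, H. reflexivity. Qed.

Lemma inv_uniq {G : Group} (x y : G) : gmul x y = gone -> y = ginv x.
Proof. intro H. apply (cancel_l x). rewrite H, gmul_Vr. reflexivity. Qed.

Lemma ginv_mul {G : Group} (x y : G) : ginv (gmul x y) = gmul (ginv y) (ginv x).
Proof. symmetry. apply inv_uniq. rewrite <- gmul_assoc, (gmul_assoc _ y), gmul_Vr, gmul_1l, gmul_Vr. reflexivity. Qed.

Lemma ginv_one {G : Group} : ginv (@gone G) = gone.
Proof. symmetry. apply inv_uniq. apply gmul_1l. Qed.

Lemma gpown_add {G : Group} (g : G) m n : gpown g (m + n) = gmul (gpown g m) (gpown g n).
Proof. induction m; simpl. rewrite gmul_1l; auto. rewrite IHm, gmul_assoc; auto. Qed.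

Lemma gpown_comm {G : Group} (g : G) n : gmul g (gpown g n) = gmul (gpown g n) g.
Proof. change (gmul g (gpown g n)) with (gpown g (1 + n)).
  rewrite PeanoNat.Nat.add_comm, gpown_add. simpl. rewrite gmul_1r. auto. Qed.

Lemma gpown_one {G : Group} n : gpown (@gone G) n = gone.
Proof. induction n; simpl; auto. rewrite IHn, gmul_1l; auto. Qed.

Lemma gpown_commute {G : Group} (g h : G) n : commute g h -> commute g (gpown h n).
Proof. unfold commute. intro H. induction n; simpl. rewrite gmul_1l, gmul_1r; auto.
  rewrite gmul_assoc, H, <- gmul_assoc, IHn, gmul_assoc. auto. Qed.

Lemma gpow_nat {G : Group} (g : G) k : 0 <= k -> gpow g k = gpown g (Z.to_nat k).
Proof. intro H. unfold gpow. destruct (Z.leb_spec 0 k); [auto | lia]. Qed.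

Lemma gpow_0 {G : Group} (g : G) : gpow g 0 = gone.
Proof. reflexivity. Qed.

Lemma gpow_succ {G : Group} (g : G) k : gpow g (k + 1) = gmul g (gpow g k).
Proof.
  destruct (Z.leb_spec 0 k).
  - rewrite !gpow_nat by lia. rewrite Z2Nat.inj_add by lia. simpl.
    rewrite PeanoNat.Nat.add_1_r. reflexivity.
  - unfold gpow. destruct (Z.leb_spec 0 (k+1)).
    + assert (k = -1) by lia. subst. simpl. rewrite gmul_1r, gmul_Vr. reflexivity.
    + destruct (Z.leb_spec 0 k); [lia|].
      replace (Z.to_nat (- k)) with (S (Z.to_nat (- (k+1)))) by lia.
      simpl. rewrite gpown_comm, ginv_mul, gmul_assoc, gmul_Vr, gmul_1l. reflexivity.
Qed.

Lemma gpow_comm {G : Group} (g : G) k : gmul g (gpow g k) = gmul (gpow g k) g.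
Proof.
  induction k using Z.peano_ind.
  - rewrite gpow_0, gmul_1l, gmul_1r; auto.
  - rewrite <- Z.add_1_r, gpow_succ. rewrite IHk at 1. rewrite gmul_assoc. auto.
  - assert (E: gmul g (gpow g (Z.pred k)) = gpow g k).
    { rewrite <- gpow_succ. f_equal. lia. }
    assert (E2: gpow g (Z.pred k) = gmul (ginv g) (gpow g k)).
    { rewrite <- E, gmul_assoc, gmul_Vl, gmul_1l. auto. }
    rewrite E, E2, <- gmul_assoc, <- IHk, gmul_assoc, gmul_Vl, gmul_1l. auto.
Qed.

Lemma gpow_succ_r {G : Group} (g : G) k : gpow g (k + 1) = gmul (gpow g k) g.
Proof. rewrite gpow_succ, gpow_comm. auto. Qed.

Lemma gpow_add {G : Group} (g : G) m n : gpow g (m + n) = gmul (gpow g m) (gpow g n).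
Proof.
  induction n using Z.peano_ind.
  - rewrite Z.add_0_r, gpow_0, gmul_1r; auto.
  - rewrite <- Z.add_1_r, Z.add_assoc, !gpow_succ_r, IHn, gmul_assoc. auto.
  - apply (cancel_r g). rewrite <- gmul_assoc, <- !gpow_succ_r.
    replace (m + Z.pred n + 1) with (m + n) by lia.
    replace (Z.pred n + 1) with n by lia. auto.
Qed.

Lemma gpow_1' {G : Group} (g : G) : gpow g 1 = g.
Proof. unfold gpow. simpl. apply gmul_1r. Qed.

Lemma gpow_opp {G : Group} (g : G) k : gpow g (- k) = ginv (gpow g k).
Proof. apply inv_uniq. rewrite <- gpow_add. replace (k + - k) with 0 by lia. auto. Qed.

Lemma gpow_m1 {G : Group} (g : G) : gpow g (-1) = ginv g.
Proof. change (-1) with (- (1)). rewrite gpow_opp, gpow_1'. auto. Qed.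

Lemma gpow_mul {G : Group} (g : G) m n : gpow g (m * n) = gpow (gpow g m) n.
Proof.
  induction n using Z.peano_ind.
  - rewrite Z.mul_0_r. auto.
  - rewrite <- Z.add_1_r, Z.mul_add_distr_l, Z.mul_1_r, gpow_add, IHn, gpow_succ_r. auto.
  - apply (cancel_r (gpow g m)). rewrite <- gpow_add.
    rewrite <- (gpow_1' (gpow g m)) at 2. rewrite <- gpow_add.
    replace (m * Z.pred n + m) with (m * n) by lia.
    replace (Z.pred n + 1) with n by lia. auto.
Qed.

Lemma gpow_one {G : Group} k : gpow (@gone G) k = gone.
Proof. unfold gpow. destruct (0 <=? k); rewrite gpown_one; auto using ginv_one. Qed.

Lemma commute_sym {G : Group} (g h : G) : commute g h -> commute h g.
Proof. unfold commute; auto. Qed.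

Lemma commute_inv {G : Group} (g h : G) : commute g h -> commute (ginv g) h.
Proof. unfold commute. intro H. apply (cancel_l g).
  rewrite (gmul_assoc _ g (ginv g)), gmul_Vr, gmul_1l.
  rewrite (gmul_assoc _ g h), H, <- gmul_assoc, gmul_Vr, gmul_1r. auto. Qed.

Lemma commute_mul {G : Group} (g1 g2 h : G) : commute g1 h -> commute g2 h -> commute (gmul g1 g2) h.
Proof. unfold commute. intros H1 H2. rewrite <- gmul_assoc, H2, gmul_assoc, H1, gmul_assoc. auto. Qed.

Lemma commute_pow_l {G : Group} (g h : G) k : commute g h -> commute (gpow g k) h.
Proof.
  intro H. unfold gpow. destruct (0 <=? k).
  - apply commute_sym, gpown_commute, commute_sym; auto.
  - apply commute_inv, commute_sym, gpown_commute, commute_sym; auto.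
Qed.

Lemma commute_pow {G : Group} (g h : G) k l : commute g h -> commute (gpow g k) (gpow h l).
Proof. intro H. apply commute_pow_l, commute_sym, commute_pow_l, commute_sym; auto. Qed.

Lemma commute_refl {G : Group} (g : G) : commute g g.
Proof. reflexivity. Qed.

Lemma gpow_mul_comm {G : Group} (g h : G) n : commute g h ->
  gpow (gmul g h) n = gmul (gpow g n) (gpow h n).
Proof.
  intro H.
  induction n using Z.peano_ind.
  - rewrite !gpow_0, gmul_1l; auto.
  - rewrite <- Z.add_1_r, !gpow_succ_r, IHn.
    rewrite <- !gmul_assoc. f_equal.
    pose proof (commute_pow_l h g n (commute_sym _ _ H)) as Hc.
    rewrite !gmul_assoc, Hc. auto.
  - apply (cancel_r (gmul g h)). rewrite <- gpow_succ_r.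
    replace (Z.pred n + 1) with n by lia. rewrite IHn.
    pose proof (commute_pow_l h g (Z.pred n) (commute_sym _ _ H)) as Hc.
    set (gp := gpow g (Z.pred n)). set (hp := gpow h (Z.pred n)).
    assert (Eg: gpow g n = gmul gp g). { unfold gp. rewrite <- gpow_succ_r. f_equal. lia. }
    assert (Eh: gpow h n = gmul hp h). { unfold hp. rewrite <- gpow_succ_r. f_equal. lia. }
    rewrite Eg, Eh. fold hp in Hc. unfold commute in Hc.
    rewrite <- !gmul_assoc. f_equal. rewrite !gmul_assoc. rewrite Hc. auto.
Qed.


Definition is_ord {G : Group} (le : G -> G -> Prop) : Prop :=
    (forall x, le x x) /\
    (forall x y, le x y -> le y x -> x = y) /\
    (forall x y z, le x y -> le y z -> le x z) /\
    (forall x y, le x y \/ le y x) /\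
    (forall g x y, le x y -> le (gmul g x) (gmul g y)).

Definition ltb {G : Group} (le : G -> G -> Prop) x y := le x y /\ x <> y.

Lemma rev_ord {G : Group} (le : G -> G -> Prop) : is_ord le -> is_ord (fun x y => le y x).
Proof. intros (H1&H2&H3&H4&H5). repeat split; eauto. Qed.

Section O.
Context {G : Group} (le : G -> G -> Prop) (Ho : is_ord le).

Lemma lt_mul_l g x y : ltb le x y -> ltb le (gmul g x) (gmul g y).
Proof. destruct Ho as (H1&H2&H3&H4&H5). intros [A B]. split; auto.
  intro E. apply B. apply (cancel_l g); auto. Qed.

Lemma lt_trans x y z : ltb le x y -> ltb le y z -> ltb le x z.
Proof. destruct Ho as (H1&H2&H3&H4&H5). intros [A B] [C D]. split; eauto.
  intro E; subst. apply B. auto. Qed.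

Lemma lt_irrefl x : ~ ltb le x x.
Proof. intros [_ B]; auto. Qed.

Lemma pow_gt1 g n : ltb le gone g -> ltb le gone (gpown g (S n)).
Proof. intro H. induction n. simpl. rewrite gmul_1r. auto.
  change (gpown g (S (S n))) with (gmul g (gpown g (S n))).
  apply lt_trans with g; auto. rewrite <- (gmul_1r G g) at 1. apply lt_mul_l; auto. Qed.

Lemma pow_lt g n m : ltb le gone g -> (n < m)%nat -> ltb le (gpown g n) (gpown g m).
Proof. intros H Hnm. replace m with (n + S (m - n - 1))%nat by lia.
  rewrite gpown_add. rewrite <- (gmul_1r G (gpown g n)) at 1. apply lt_mul_l, pow_gt1; auto. Qed.

Lemma pow_le1 g n : le g gone -> le (gpown g n) gone.
Proof. destruct Ho as (H1&H2&H3&H4&H5). intro H. induction n; simpl; auto.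
  apply H3 with (gmul g gone). apply H5; auto. rewrite gmul_1r; auto. Qed.

Lemma root_gt1 g K c : gpown g K = c -> ltb le gone c -> ltb le gone g.
Proof. pose proof Ho as (H1&H2&H3&H4&H5). intros E [A B].
  destruct (H4 gone g) as [C|C].
  - split; auto. intro Eg; subst. apply B. rewrite gpown_one; auto.
  - exfalso. apply B. apply H2; auto. subst. apply pow_le1; auto. Qed.

Lemma pow_lt_pow m c n : commute m c -> ltb le m c -> ltb le (gpown m (S n)) (gpown c (S n)).
Proof. intros Hc H. induction n. simpl. rewrite !gmul_1r; auto.
  change (gpown m (S (S n))) with (gmul m (gpown m (S n))).
  apply lt_trans with (gmul m (gpown c (S n))). apply lt_mul_l; auto.
  pose proof (gpown_commute m c (S n) Hc) as Hc2. unfold commute in Hc2. rewrite Hc2.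
  change (gpown c (S (S n))) with (gmul c (gpown c (S n))). rewrite gpown_comm.
  apply lt_mul_l; auto. Qed.

Lemma core c mu w1 w2 N M : ltb le gone c -> ltb le w1 c -> ltb le w2 c -> commute w1 c ->
  commute mu c -> mu = gmul (ginv c) (gmul w1 w2) -> gpown mu N = gpown c M ->
  (1 <= N)%nat -> (N < M)%nat -> False.
Proof.
  intros Hc H1 H2 Hw1 Hmc Emu Heq HN HNM.
  assert (L1: ltb le (gmul w1 w2) (gmul c c)).
  { apply lt_trans with (gmul w1 c). apply lt_mul_l; auto.
    rewrite Hw1. apply lt_mul_l; auto. }
  assert (L2: ltb le mu c).
  { rewrite Emu. replace c with (gmul (ginv c) (gmul c c)) at 2.
    apply lt_mul_l; auto. rewrite gmul_assoc, gmul_Vl, gmul_1l. auto. }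
  destruct N as [|N]; [lia|].
  pose proof (pow_lt_pow mu c N Hmc L2) as L3.
  assert (L4: ltb le (gpown c (S N)) (gpown c M)) by (apply pow_lt; auto).
  apply (lt_irrefl (gpown mu (S N))). rewrite Heq at 2. eapply lt_trans; eauto.
Qed.

End O.
Lemma tf_aux {G : Group} (le : G -> G -> Prop) (Ho : is_ord le) (g : G) n : le gone g -> (1 <= n)%nat -> gpown g n = gone -> g = @gone G.
Proof. pose proof Ho as (H1&H2&H3&H4&H5). intros H Hn E. destruct n; [lia|].
  apply H2; auto. rewrite <- E. simpl. rewrite <- (gmul_1r G g) at 1. apply H5.
  pose proof (pow_le1 (fun x y => le y x) (rev_ord le Ho) g n H). auto. Qed.

Lemma torsion_free {G : Group} (le : G -> G -> Prop) (Ho : is_ord le) g n :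
  (1 <= n)%nat -> gpown g n = gone -> g = @gone G.
Proof.
  intros Hn E. pose proof Ho as (H1&H2&H3&H4&H5). destruct (H4 gone g).
  - eapply tf_aux; eauto.
  - eapply (tf_aux _ (rev_ord le Ho)); eauto.
Qed.


Definition E {G : Group} (mu c : G) (k l : Z) := gmul (gpow mu k) (gpow c l).

Section S.
Context {G : Group} (mu c : G) (H : commute mu c).

Lemma E_mul k l k' l' : gmul (E mu c k l) (E mu c k' l') = E mu c (k + k') (l + l').
Proof. unfold E. rewrite !gpow_add. rewrite <- !gmul_assoc. f_equal.
  rewrite !gmul_assoc. f_equal. symmetry. apply commute_pow; auto. Qed.

Lemma E_pow k l n : gpow (E mu c k l) n = E mu c (k * n) (l * n).
Proof. unfold E. rewrite gpow_mul_comm by (apply commute_pow; auto). rewrite !gpow_mul. auto. Qed.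

Lemma E_comm k l k' l' : commute (E mu c k l) (E mu c k' l').
Proof. unfold commute. rewrite !E_mul. f_equal; lia. Qed.

Lemma E_00 : E mu c 0 0 = gone.
Proof. unfold E. rewrite !gpow_0, gmul_1l. auto. Qed.

Lemma E_inv k l : ginv (E mu c k l) = E mu c (-k) (-l).
Proof. symmetry. apply inv_uniq. rewrite E_mul. rewrite <- E_00. f_equal; lia. Qed.

Lemma E_k0 k : E mu c k 0 = gpow mu k.
Proof. unfold E. rewrite gpow_0, gmul_1r. auto. Qed.
Lemma E_0l l : E mu c 0 l = gpow c l.
Proof. unfold E. rewrite gpow_0, gmul_1l. auto. Qed.

Lemma E_eq k l k' l' : E mu c k l = E mu c k' l' -> gpow mu (k - k') = gpow c (l' - l).
Proof. intro Eq. rewrite <- E_k0, <- E_0l.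
  assert (A: gmul (E mu c (-k') (-l)) (E mu c k l) = gmul (E mu c (-k') (-l)) (E mu c k' l')) by (rewrite Eq; auto).
  rewrite !E_mul in A. replace (k - k') with (-k' + k) by lia. replace (l' - l) with (-l + l') by lia.
  replace 0 with (-l + l) by lia. rewrite A. f_equal; lia. Qed.
End S.


Theorem corollary3p4 :
  forall (x y p q i j u v beta : Z),
    2 <= x -> 2 <= y -> Z.gcd x y = 1 -> 2 <= p -> q = p * x * y - 1 ->
    x * j + y * i = 1 -> p * u - q * v = 1 -> 0 < beta ->
    forall (Q : Group) (a b t : Q),
      gpow a x = gpow b y ->
      gmul (gpow (mu_el a b i j) q) (gpow (lambda_el a b x y i j) p) = gpow t p ->
      (forall g : Q, generated (fun h => h = a \/ h = b \/ h = t) g) ->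
      left_orderable Q ->
      gmul (gpow (muC_el a b t x y i j u v) (p * q * beta - 1))
           (gpow (lambdaC_el a b t x y i j u v p q) beta) <> gone.
Proof.
  intros x y p q i j u v beta Hx Hy Hgcd Hp Hq Hji Huv Hb Q a b t Hab Hrel Hgen [[g0 Hg0] [le Hle]].
  assert (Ho : is_ord le) by exact Hle. clear Hle.
  set (c := gpow a x) in *.
  assert (Hac : commute a c) by (apply commute_sym, commute_pow_l, commute_refl).
  assert (Hbc : commute b c) by (rewrite Hab; apply commute_sym, commute_pow_l, commute_refl).
  set (mu := mu_el a b i j) in *.
  assert (Hmc : commute mu c).
  { unfold mu, mu_el. apply commute_mul; apply commute_pow_l; auto. }
  assert (Hlam : lambda_el a b x y i j = E mu c (-(x*y)) 1).
  { unfold lambda_el, E. fold mu. fold c. rewrite gpow_1'. auto. }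
  rewrite Hlam in Hrel.
  assert (Hs : gpow t p = E mu c (-1) p).
  { rewrite <- Hrel. rewrite <- (E_k0 mu c q), E_pow, E_mul by auto. f_equal; subst q; ring. }
  clear Hrel.
  intro Hgoal.
  assert (Hmain : gpow mu (1 + p * beta) = gpow c (p * p * beta)).
  { unfold lambdaC_el in Hgoal.
    unfold muC_el in Hgoal. fold mu in Hgoal. rewrite Hlam in Hgoal.
    assert (He : gmul (gpow mu u) (gpow (E mu c (- (x * y)) 1) v) = E mu c (u - v * (x*y)) v).
    { rewrite <- (E_k0 mu c u), E_pow, E_mul by auto. f_equal; ring. }
    rewrite He in Hgoal.
    set (m := gmul (E mu c (u - v * (x * y)) v) (gpow t (- v))) in *.
    set (s := gpow t p) in *.
    assert (Hms : commute m s).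
    { unfold m. apply commute_mul.
      - rewrite Hs. apply E_comm; auto.
      - unfold s. apply commute_pow, commute_refl. }
    rewrite gpow_mul_comm in Hgoal by (apply commute_pow_l; auto).
    rewrite <- gpow_mul, gmul_assoc, <- gpow_add in Hgoal.
    replace (p * q * beta - 1 + - (p * q) * beta) with (-1) in Hgoal by ring.
    rewrite gpow_m1 in Hgoal.
    assert (Hm : gpow s beta = m).
    { apply (cancel_l (ginv m)). rewrite Hgoal, gmul_Vl. auto. }
    unfold m in Hm.
    rewrite Hs, E_pow in Hm by auto.
    assert (Ht : gpow t (- v) = E mu c (- (u - v * (x * y)) + -1 * beta) (- v + p * beta)).
    { rewrite <- E_mul by auto. rewrite <- E_inv by auto. rewrite Hm.
      rewrite gmul_assoc, gmul_Vl, gmul_1l. auto. }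
    assert (Ht2 : gpow (gpow t (- v)) p = gpow (gpow t p) (- v)).
    { rewrite <- !gpow_mul. f_equal. ring. }
    fold s in Ht2. rewrite Ht, Hs, !E_pow in Ht2 by auto.
    apply E_eq in Ht2; auto.
    replace ((- (u - v * (x * y)) + -1 * beta) * p - -1 * - v) with (-(1 + p * beta)) in Ht2.
    2:{ transitivity (-(p * u - q * v) - p * beta). rewrite Huv. ring. subst q; ring. }
    replace (p * - v - (- v + p * beta) * p) with (-(p * p * beta)) in Ht2 by ring.
    rewrite !gpow_opp in Ht2.
    rewrite (inv_uniq (ginv (gpow mu (1 + p * beta))) (gpow mu (1 + p * beta))) by apply gmul_Vl.
    rewrite (inv_uniq (ginv (gpow c (p * p * beta))) (gpow c (p * p * beta))) by apply gmul_Vl.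
    rewrite Ht2. auto. }
  clear Hgoal.
  assert (Hcb : gpown b (Z.to_nat y) = c) by (rewrite <- gpow_nat by lia; auto).
  assert (Hca : gpown a (Z.to_nat x) = c) by (unfold c; rewrite <- gpow_nat by lia; auto).
  destruct (classic (c = gone)) as [Hc1|Hc1].
  -
    assert (Ha1 : a = gone) by (apply (torsion_free le Ho a (Z.to_nat x)); [lia | congruence]).
    assert (Hb1 : b = gone) by (apply (torsion_free le Ho b (Z.to_nat y)); [lia | congruence]).
    assert (Hmu1 : mu = gone).
    { unfold mu, mu_el. rewrite Ha1, Hb1, !gpow_one, gmul_1l. auto. }
    assert (Ht1 : t = gone).
    { apply (torsion_free le Ho t (Z.to_nat p)). lia.
      rewrite <- gpow_nat by lia. rewrite Hs. unfold E. rewrite Hmu1, Hc1, !gpow_one, gmul_1l. auto. }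
    apply Hg0. clear Hg0. specialize (Hgen g0). induction Hgen.
    + auto.
    + destruct H as [ -> | [ -> | -> ] ]; auto.
    + rewrite IHHgen1, IHHgen2, gmul_1l. auto.
    + rewrite IHHgen. apply ginv_one.
  - assert (Hfin : forall le' : Q -> Q -> Prop, is_ord le' -> ltb le' gone c -> False).
    { intros le' Ho' Hlt.
      pose proof (Z.div_mod j y ltac:(lia)) as Hj.
      pose proof (Z.div_mod i x ltac:(lia)) as Hi.
      pose proof (Z.mod_pos_bound j y ltac:(lia)) as Hr.
      pose proof (Z.mod_pos_bound i x ltac:(lia)) as Hr'.
      set (s1 := j / y) in *. set (r := j mod y) in *.
      set (s2 := i / x) in *. set (r' := i mod x) in *.
      clearbody s1 r s2 r'.
      assert (Hsum : x * y * (s1 + s2) + x * r + y * r' = 1) by (rewrite Hj, Hi in Hji; lia).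
      assert (Hr0 : r <> 0).
      { intro. subst r. assert (y * (x * (s1 + s2) + r') = 1) by lia.
        destruct (Z.le_gt_cases (x * (s1 + s2) + r') 0); nia. }
      assert (Hr0' : r' <> 0).
      { intro. subst r'. assert (x * (y * (s1 + s2) + r) = 1) by lia.
        destruct (Z.le_gt_cases (y * (s1 + s2) + r) 0); nia. }
      assert (Hs12 : s1 + s2 = -1).
      { assert (x * r >= x) by nia. assert (y * r' >= y) by nia.
        assert (x * r <= x * (y - 1)) by nia. assert (y * r' <= y * (x - 1)) by nia.
        assert (x * y > 0) by nia.
        destruct (Z.le_gt_cases (s1 + s2) (-2)); [|destruct (Z.le_gt_cases 0 (s1 + s2))]; nia. }
      assert (Hmud : mu = gmul (ginv c) (gmul (gpow b r) (gpow a r'))).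
      { assert (mu = gmul (gpow b (y * s1 + r)) (gpow a (x * s2 + r'))) as ->.
        { unfold mu, mu_el. rewrite <- Hj, <- Hi. auto. }
        rewrite !gpow_add, !gpow_mul, <- Hab. fold c.
        assert (Hcm : commute (gpow b r) (gpow c s2)) by (apply commute_pow; auto).
        rewrite <- !gmul_assoc. rewrite (gmul_assoc _ (gpow b r)), Hcm, <- gmul_assoc.
        rewrite !gmul_assoc, <- gpow_add, Hs12, gpow_m1, <- !gmul_assoc. auto. }
      apply (core le' Ho' c mu (gpow b r) (gpow a r') (Z.to_nat (1 + p * beta)) (Z.to_nat (p * p * beta))); auto.
      - rewrite gpow_nat by lia. rewrite <- Hcb. apply pow_lt; auto.
        eapply root_gt1; eauto. lia.
      - rewrite gpow_nat by lia. rewrite <- Hca. apply pow_lt; auto.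
        eapply root_gt1; eauto. lia.
      - apply commute_pow_l; auto.
      - rewrite <- !gpow_nat by nia. auto.
      - nia.
      - assert (p * beta >= 2) by nia. assert (p * p * beta >= 2 * (p * beta)) by nia. lia. }
    pose proof Ho as (H1&H2&H3&H4&H5).
    destruct (H4 gone c) as [L|L].
    + apply (Hfin le); auto. split; auto.
    + apply (Hfin (fun x y => le y x)). apply rev_ord; auto. split; auto.
Qed.
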